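(* Let $\mathfrak g$ be an $8$-dimensional filiform Lie algebra with associated triple $(4,5,8)$, and let $\alpha_1,\alpha_2,\gamma_1,\gamma_2,\beta_{12},\beta_{22},\beta_{13},\beta_{23},\beta_{33}$ be its parameters with respect to an adapted basis $\{e_h\}$. Then $\alpha_1=0$, $\alpha_2=-\gamma_1$, $\gamma_2=-\tfrac52\beta_{12}$, $\gamma_1\ne0$; moreover $[C^3\mathfrak g,C^3\mathfrak g]=[C^3\mathfrak g,C^4\mathfrak g]=\langle e_2\rangle$, $[C^3\mathfrak g,C^5\mathfrak g]=\{0\}$, $[C^2\mathfrak g,C^2\mathfrak g]=[C^2\mathfrak g,C^3\mathfrak g]=\langle e_2,\beta_{12}e_3\rangle$, $[C^2\mathfrak g,C^4\mathfrak g]=[C^2\mathfrak g,C^5\mathfrak g]=\langle e_2\rangle$, $[C^2\mathfrak g,C^6\mathfrak g]=\{0\}$. Consequently $$\mathrm{HP}_{\mathfrak g}-\mathrm{HP}^{(0)}_{\mathfrak g}=c\,(t^2s^2+t^2s^3+t^3s^2)+(t^2s^4+t^3s^3+t^4s^2)+(t^2s^5+t^3s^4+t^4s^3+t^5s^2),$$ with $c=2$ if $\beta_{12}\ne0$ and $c=1$ if $\beta_{12}=0$; both cases occur, so $\mathrm{HP}$ separates two isomorphism classes of filiform Lie algebras with triple $(4,5,8)$.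
   Context: All Lie algebras are over $\mathbb C$; $C^1\mathfrak g=\mathfrak g$, $C^k\mathfrak g=[C^{k-1}\mathfrak g,\mathfrak g]$. A Lie algebra is filiform if $\dim\mathfrak g=n\ge2$ and $\dim C^k\mathfrak g=n-k$ for $2\le k\le n$. An adapted basis of a filiform $\mathfrak g$ is a basis $\{e_1,\dots,e_n\}$ with $[e_1,e_h]=e_{h-1}$ ($3\le h\le n$), $[e_2,e_h]=0$ ($1\le h\le n$), $[e_3,e_h]=0$ ($2\le h\le n$); then $C^k\mathfrak g=\langle e_2,\dots,e_{n-k+1}\rangle$. For non-model filiform $\mathfrak g$, $z_1=\min\{k\ge4:[e_k,e_n]\ne0\}$, $z_2=\min\{k\ge4:[e_k,e_{k+1}]\ne0\}$ (in any adapted basis) are invariants; $(z_1,z_2,n)$ is the associated triple. $P_h(u)$ is the $h$-th coordinate of $u$ in $\{e_h\}$. General law (known result) for triple $(z_1,z_2,n)$: there are complex numbers $\alpha_i$ ($1\le i\le z_2-z_1+1$), $\gamma_j$ ($1\le j\le n-z_2-1$), $\beta_{k\ell}$ ($2\le\ell\le n-z_2$, $1\le k<z_2-z_1+\ell$), the parameters, with $[e_1,e_h]=e_{h-1}$; $[e_{z_1+i},e_{z_2+1}]=\alpha_1e_{i+2}+\dots+\alpha_{i+1}e_2$ ($0\le i\le z_2-z_1$); $[e_{z_1},e_{z_2+j}]=\alpha_1e_{j+1}+\gamma_1e_j+\dots+\gamma_{j-1}e_2$ ($2\le j\le n-z_2$); $[e_{z_1+k},e_{z_2+\ell}]=\sum_{h=2}^{k+\ell}P_h([e_{z_1+k-1},e_{z_2+\ell}]+[e_{z_1+k},e_{z_2+\ell-1}])e_{h+1}+\beta_{k\ell}e_2$;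 all other brackets $[e_a,e_b]$, $2\le a<b$, zero. For $(4,5,8)$ the parameters are $\alpha_1,\alpha_2,\gamma_1,\gamma_2,\beta_{12},\beta_{22},\beta_{13},\beta_{23},\beta_{33}$. Hilbert polynomial: $\mathrm{HP}_{\mathfrak g}(t,s)=\sum_{k,\ell\ge1}\dim[C^k\mathfrak g,C^\ell\mathfrak g]\,t^ks^\ell$; $\mathrm{HP}^{(0)}_{\mathfrak g}=(n-2)ts+\sum_{2\le k\le n-2}(n-k-1)(t^ks+ts^k)$. *)

(* Defs.v *)
(* The ground field C is modelled as R[i] for R : realType
   (the complex numbers over an arbitrary model of the reals). *)
From HB Require Import structures.
From mathcomp Require Import all_boot all_order all_algebra.
From mathcomp.real_closed Require Export complex.
From mathcomp Require Export reals.
Set Implicit Arguments.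
Unset Strict Implicit.
Unset Printing Implicit Defensive.
Import GRing.Theory.
Local Open Scope ring_scope.

Section LieDefs.
Variables (F : fieldType) (V : vectType F).

Definition is_lie (br : V -> V -> V) : Prop :=
  [/\ (forall (a : F) x y z, br (a *: x + y) z = a *: br x z + br y z),
      (forall (a : F) x y z, br x (a *: y + z) = a *: br x y + br x z),
      (forall x, br x x = 0)
    & (forall x y z, br x (br y z) + br y (br z x) + br z (br x y) = 0)].

(* [U, W] : the subspace spanned by all brackets [u, w], u in U, w in W
   (by bilinearity, spanned by the brackets of basis vectors). *)
Definition brsp (br : V -> V -> V) (U W : {vspace V}) : {vspace V} :=
  <<[seq br u w | u <- vbasis U, w <- vbasis W]>>%VS.

Fixpoint lcs (br : V -> V -> V) (k : nat) : {vspace V} :=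
  match k with
  | 0 | 1 => fullv
  | k'.+1 => brsp br (lcs br k') fullv
  end.

Definition filiform (n : nat) (br : V -> V -> V) : Prop :=
  [/\ (2 <= n)%N, \dim (fullv : {vspace V}) = n &
      forall k, (2 <= k <= n)%N -> \dim (lcs br k) = (n - k)%N].

(* The basis e_1, ..., e_n, indexed by naturals 1..n. *)
Definition btuple (n : nat) (e : nat -> V) : n.-tuple V :=
  [tuple e i.+1 | i < n].

Definition adapted_basis (n : nat) (br : V -> V -> V) (e : nat -> V) : Prop :=
  [/\ basis_of fullv (btuple n e),
      (forall h, (3 <= h <= n)%N -> br (e 1%N) (e h) = e h.-1),
      (forall h, (1 <= h <= n)%N -> br (e 2%N) (e h) = 0)
    & (forall h, (2 <= h <= n)%N -> br (e 3%N) (e h) = 0)].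

Definition is_min_ge4 (P : nat -> Prop) (z : nat) : Prop :=
  [/\ (4 <= z)%N, P z & forall k, (4 <= k < z)%N -> ~ P k].

Definition assoc_triple (n : nat) (br : V -> V -> V) (e : nat -> V)
    (z1 z2 : nat) : Prop :=
  is_min_ge4 (fun k => br (e k) (e n) <> 0) z1 /\
  is_min_ge4 (fun k => br (e k) (e k.+1) <> 0) z2.

(* P_h(u): h-th coordinate of u in the basis e_1..e_n (0 if h is out of range). *)
Definition Pcoord (n : nat) (e : nat -> V) (h : nat) (u : V) : F :=
  \sum_(i < n | i.+1 == h) coord (btuple n e) i u.

(* The pairs (a,b) covered by the first three families of brackets of the law. *)
Definition law_listed (z1 z2 n a b : nat) : bool :=
  [|| (z1 <= a <= z2)%N && (b == z2 + 1)%N,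
      (a == z1) && (z2 + 2 <= b <= n)%N
    | [&& (z1 + 1 <= a)%N, (z2 + 2 <= b <= n)%N & (a - z1 < z2 - z1 + (b - z2))%N]].

Definition general_law (z1 z2 n : nat) (br : V -> V -> V) (e : nat -> V)
    (al ga : nat -> F) (be : nat -> nat -> F) : Prop :=
  [/\ (forall i, (i <= z2 - z1)%N ->
         br (e (z1 + i)%N) (e (z2 + 1)%N)
           = \sum_(0 <= m < i.+1) al m.+1 *: e (i + 2 - m)%N),
      (forall j, (2 <= j <= n - z2)%N ->
         br (e z1) (e (z2 + j)%N)
           = al 1%N *: e (j + 1)%N + \sum_(1 <= m < j) ga m *: e (j + 1 - m)%N),
      (forall k l, (2 <= l <= n - z2)%N -> (1 <= k < z2 - z1 + l)%N ->
         br (e (z1 + k)%N) (e (z2 + l)%N)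
           = \sum_(2 <= h < (k + l).+1)
                Pcoord n e h (br (e (z1 + k - 1)%N) (e (z2 + l)%N)
                              + br (e (z1 + k)%N) (e (z2 + l - 1)%N)) *: e h.+1
             + be k l *: e 2%N)
    & (forall a b, (2 <= a)%N -> (a < b)%N -> (b <= n)%N ->
         ~~ law_listed z1 z2 n a b -> br (e a) (e b) = 0)].

Definition has_parameters (z1 z2 n : nat) (br : V -> V -> V) (e : nat -> V)
    (al ga : nat -> F) (be : nat -> nat -> F) : Prop :=
  [/\ is_lie br, filiform n br, adapted_basis n br e,
      assoc_triple n br e z1 z2 & general_law z1 z2 n br e al ga be].

(* Coefficient of t^k s^l in HP_g = sum_{k,l>=1} dim [C^k g, C^l g] t^k s^l. *)
Definition HPcoef (br : V -> V -> V) (k l : nat) : int :=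
  if (1 <= k)%N && (1 <= l)%N then (\dim (brsp br (lcs br k) (lcs br l)))%:Z
  else 0.

End LieDefs.

(* Coefficient of t^k s^l in HP^(0) = (n-2) t s + sum_{2<=k<=n-2} (n-k-1)(t^k s + t s^k). *)
Definition HP0coef (n k l : nat) : int :=
  if (k == 1%N) && (l == 1%N) then (n - 2)%:Z
  else if (l == 1%N) && (2 <= k <= n - 2)%N then (n - k - 1)%:Z
  else if (k == 1%N) && (2 <= l <= n - 2)%N then (n - l - 1)%:Z
  else 0.

Definition mono (a b k l : nat) : int := ((k == a) && (l == b) : nat)%:Z.

Definition HPdiff458 (c : int) (k l : nat) : int :=
  c * (mono 2 2 k l + mono 2 3 k l + mono 3 2 k l)
  + (mono 2 4 k l + mono 3 3 k l + mono 4 2 k l)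
  + (mono 2 5 k l + mono 3 4 k l + mono 4 3 k l + mono 5 2 k l).

(* Main.v *)
Require Import Defs.
From HB Require Import structures.
From mathcomp Require Import all_boot all_order all_algebra.
From mathcomp.real_closed Require Import complex.
From mathcomp Require Import reals.
From mathcomp Require Import ring zify.
Import GRing.Theory Num.Theory.
Set Implicit Arguments.
Unset Strict Implicit.
Unset Printing Implicit Defensive.
Local Open Scope ring_scope.

Section Gen.
Variables (F : fieldType) (V : vectType F) (br : V -> V -> V).
Hypothesis Hlie : is_lie br.

Lemma brL a x y z : br (a *: x + y) z = a *: br x z + br y z.
Proof. by case: Hlie. Qed.
Lemma brR a x y z : br x (a *: y + z) = a *: br x y + br x z.
Proof. by case: Hlie. Qed.
Lemma brxx x : br x x = 0.
Proof. by case: Hlie. Qed.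
Lemma brJ x y z : br x (br y z) + br y (br z x) + br z (br x y) = 0.
Proof. by case: Hlie. Qed.

Lemma brDl x y z : br (x + y) z = br x z + br y z.
Proof. by have := brL 1 x y z; rewrite !scale1r. Qed.
Lemma brDr x y z : br z (x + y) = br z x + br z y.
Proof. by have := brR 1 z x y; rewrite !scale1r. Qed.
Lemma br0l z : br 0 z = 0.
Proof. by apply: (addrI (br 0 z)); rewrite -brDl !addr0. Qed.
Lemma br0r z : br z 0 = 0.
Proof. by apply: (addrI (br z 0)); rewrite -brDr !addr0. Qed.
Lemma brZl a x z : br (a *: x) z = a *: br x z.
Proof. by rewrite -[a *: x]addr0 brL br0l addr0. Qed.
Lemma brZr a x z : br z (a *: x) = a *: br z x.
Proof. by rewrite -[a *: x]addr0 brR br0r addr0. Qed.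
Lemma brNl x z : br (- x) z = - br x z.
Proof. by rewrite -scaleN1r brZl scaleN1r. Qed.
Lemma brNr x z : br z (- x) = - br z x.
Proof. by rewrite -scaleN1r brZr scaleN1r. Qed.
Lemma brBl x y z : br (x - y) z = br x z - br y z.
Proof. by rewrite brDl brNl. Qed.
Lemma brBr x y z : br z (x - y) = br z x - br z y.
Proof. by rewrite brDr brNr. Qed.
Lemma br_anti x y : br y x = - br x y.
Proof.
have h := brxx (x + y).
rewrite brDl !brDr !brxx add0r addr0 in h.
by apply/eqP; rewrite -addr_eq0 addrC h.
Qed.
Lemma br_suml I r (P : pred I) (f : I -> V) z :
  br (\sum_(i <- r | P i) f i) z = \sum_(i <- r | P i) br (f i) z.
Proof. exact: (big_morph (br^~ z) (fun x y => brDl x y z) (br0l z)). Qed.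
Lemma br_sumr I r (P : pred I) (f : I -> V) z :
  br z (\sum_(i <- r | P i) f i) = \sum_(i <- r | P i) br z (f i).
Proof. exact: (big_morph (br z) (fun x y => brDr x y z) (br0r z)). Qed.

Lemma mem_brsp (U W : {vspace V}) u w : u \in U -> w \in W -> br u w \in brsp br U W.
Proof.
move=> uU wW; rewrite (coord_vbasis uU) (coord_vbasis wW) br_suml.
apply: rpred_sum => i _; rewrite brZl br_sumr; apply: rpredZ.
apply: rpred_sum => j _; rewrite brZr; apply: rpredZ; apply: memv_span.
apply: allpairs_f; apply: mem_nth; by rewrite size_tuple.
Qed.

Lemma brsp_subP (U W : {vspace V}) (S : {vspace V}) :
  (forall u w, u \in U -> w \in W -> br u w \in S) -> (brsp br U W <= S)%VS.
Proof.
move=> H; apply/span_subvP => x /allpairsP [[u w] [/= uU wW ->]].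
by apply: H; apply: vbasis_mem.
Qed.

Lemma br_span_sub (X Y : seq V) (S : {vspace V}) :
  (forall x y, x \in X -> y \in Y -> br x y \in S) ->
  forall u w, u \in <<X>>%VS -> w \in <<Y>>%VS -> br u w \in S.
Proof.
move=> H u w uX wY.
rewrite (coord_span (X := in_tuple X) uX) (coord_span (X := in_tuple Y) wY).
rewrite br_suml; apply: rpred_sum => i _; rewrite brZl br_sumr; apply: rpredZ.
apply: rpred_sum => j _; rewrite brZr; apply: rpredZ; apply: H; exact: mem_nth.
Qed.

Lemma brsp_span_sub (X Y : seq V) (S : {vspace V}) :
  (forall x y, x \in X -> y \in Y -> br x y \in S) ->
  (brsp br <<X>> <<Y>> <= S)%VS.
Proof. by move=> H; apply: brsp_subP; apply: br_span_sub. Qed.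

Lemma brspC (U W : {vspace V}) : brsp br U W = brsp br W U.
Proof.
by apply/eqP; rewrite eqEsubv; apply/andP; split; apply: brsp_subP => u w uU wW;
  rewrite br_anti rpredN mem_brsp.
Qed.

End Gen.

Section Basis.
Variables (F : fieldType) (V : vectType F) (e : nat -> V).
Hypothesis Hb : basis_of fullv (btuple 8 e).

Local Notation X := (btuple 8 e).
Local Notation P := (Pcoord 8 e).

Lemma nthX (i : 'I_8) : X`_i = e i.+1.
Proof. by rewrite /btuple nth_mktuple. Qed.

Lemma freeX : free X.
Proof. exact: basis_free Hb. Qed.

Lemma PcoordD h u v : P h (u + v) = P h u + P h v.
Proof. by rewrite /Pcoord -big_split; apply: eq_bigr => i _; rewrite linearD. Qed.
Lemma PcoordZ h a u : P h (a *: u) = a * P h u.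
Proof. by rewrite /Pcoord mulr_sumr; apply: eq_bigr => i _; rewrite linearZ. Qed.
Lemma Pcoord0 h : P h 0 = 0.
Proof. by rewrite /Pcoord big1 // => i _; rewrite linear0. Qed.
Lemma PcoordN h u : P h (- u) = - P h u.
Proof. by rewrite -scaleN1r PcoordZ mulN1r. Qed.
Lemma Pcoord_sum h I r (Q : pred I) (f : I -> V) :
  P h (\sum_(i <- r | Q i) f i) = \sum_(i <- r | Q i) P h (f i).
Proof. exact: (big_morph (P h) (PcoordD h) (Pcoord0 h)). Qed.

Lemma Pcoord_ord (i : 'I_8) v : P i.+1 v = coord X i v.
Proof.
by rewrite /Pcoord (eq_bigl (fun j => j == i)) ?big_pred1_eq.
Qed.

Lemma Pcoord_e h m : (1 <= m <= 8)%N -> P h (e m) = (h == m)%:R.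
Proof.
case: m => // m /andP [_ Hm].
set o := Ordinal Hm.
have -> : e m.+1 = X`_o by rewrite nthX.
rewrite /Pcoord big_mkcond (bigD1 o) // big1 => [|i Hi].
  rewrite coord_free ?freeX // eqxx /= addr0 eq_sym.
  by case: (h == m.+1).
rewrite coord_free ?freeX // [o == i]eq_sym (negPf (Hi : i != o)).
by case: (i.+1 == h).
Qed.

Lemma expand v : v = \sum_(0 <= i < 8) P i.+1 v *: e i.+1.
Proof.
rewrite big_mkord {1}(coord_basis Hb (memvf v)).
by apply: eq_bigr => i _; rewrite nthX Pcoord_ord.
Qed.

Lemma eq_coords u v : (forall m, (1 <= m <= 8)%N -> P m u = P m v) -> u = v.
Proof.
move=> H; rewrite (expand u) (expand v); apply: eq_big_nat => i /andP[_ Hi].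
by rewrite H.
Qed.

Lemma e_neq0 m : (1 <= m <= 8)%N -> e m != 0.
Proof.
move=> Hm; apply/eqP => H; have := @Pcoord_e m m Hm; rewrite H Pcoord0 eqxx => /eqP.
by rewrite eq_sym oner_eq0.
Qed.

Lemma btupleE : (X : seq V) = [seq e i | i <- iota 1 8].
Proof.
apply: (@eq_from_nth _ 0); first by rewrite size_tuple size_map size_iota.
move=> i; rewrite size_tuple => Hi.
by rewrite (nth_map 0%N) ?size_iota // nth_iota // (nthX (Ordinal Hi)) add1n.
Qed.

Definition Sp (m : nat) : {vspace V} := <<[seq e i | i <- iota 2 m]>>%VS.

Lemma dim_Sp m : (m <= 7)%N -> \dim (Sp m) = m.
Proof.
move=> Hm; have := freeX; rewrite btupleE.
have -> : iota 1 8 = 1%N :: (iota 2 m ++ iota (2 + m) (7 - m)).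
  by rewrite -iotaD subnKC.
rewrite map_cons -cat1s map_cat => /catr_free /catl_free.
by rewrite /free size_map size_iota => /eqP.
Qed.

Lemma mem_Sp m i : (2 <= i < m.+2)%N -> e i \in Sp m.
Proof.
move=> Hi; apply: memv_span; apply: map_f; rewrite mem_iota.
by case/andP: Hi => -> /=; rewrite add2n.
Qed.

Lemma Sp_sub m (S : {vspace V}) :
  (forall i, (2 <= i < m.+2)%N -> e i \in S) -> (Sp m <= S)%VS.
Proof.
move=> H; apply/span_subvP => x; case/mapP => i; rewrite mem_iota => Hi ->.
by apply: H; rewrite add2n in Hi.
Qed.

Lemma Sp_mono m1 m2 : (m1 <= m2)%N -> (Sp m1 <= Sp m2)%VS.
Proof.
move=> H; apply: Sp_sub => i /andP [H1 H2]; apply: mem_Sp.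
by rewrite H1 (leq_trans H2).
Qed.

Lemma Sp0 : Sp 0 = 0%VS.
Proof. by rewrite /Sp span_nil. Qed.

Variable br : V -> V -> V.
Hypothesis Hlie : is_lie br.
Hypothesis H1 : forall h, (3 <= h <= 8)%N -> br (e 1%N) (e h) = e h.-1.

Definition Tc a b h := P h (br (e a) (e b)).

Lemma Pcoord_br x w m :
  P m (br x w) = \sum_(0 <= i < 8) P i.+1 w * P m (br x (e i.+1)).
Proof.
rewrite {1}(expand w) (br_sumr Hlie) Pcoord_sum.
by apply: eq_bigr => i _; rewrite (brZr Hlie) PcoordZ.
Qed.

Lemma jac_coord a b c m :
  \sum_(0 <= i < 8) (Tc b c i.+1 * Tc a i.+1 m + Tc c a i.+1 * Tc b i.+1 m
                    + Tc a b i.+1 * Tc c i.+1 m) = 0.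
Proof.
have := brJ Hlie (e a) (e b) (e c) => /(congr1 (P m)).
rewrite !PcoordD !Pcoord_br Pcoord0 -!big_split /= => E.
by rewrite /Tc; exact: E.
Qed.

Lemma Sp_lcs k : (Sp (6 - k) <= lcs br k.+2)%VS.
Proof.
elim: k => [|k IH].
  apply: Sp_sub => i /andP [Hi1 Hi2].
  have -> : e i = br (e 1%N) (e i.+1) by rewrite H1 //=; lia.
  by apply: mem_brsp => //; apply: memvf.
apply: Sp_sub => i /andP [Hi1 Hi2].
have -> : e i = - br (e i.+1) (e 1%N).
  by rewrite (br_anti Hlie) opprK H1 //=; lia.
rewrite rpredN; apply: (@mem_brsp _ _ _ Hlie (lcs br k.+2)); last exact: memvf.
apply: (subvP IH); apply: mem_Sp; lia.
Qed.

End Basis.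

Ltac unroll := repeat first [ rewrite big_geq; last by [] | rewrite big_ltn; last by [] ].
Ltac unroll_in H := repeat first [ rewrite big_geq in H; last by [] | rewrite big_ltn in H; last by [] ].
Ltac peval := rewrite ?(PcoordD, PcoordZ, PcoordN, Pcoord_sum, Pcoord0).

Ltac by_m := let m := fresh "m" in let H := fresh "H" in let H' := fresh "H" in
  move=> m /andP [H H']; move: m H H'; case; first done;
  do 8! (case; first by move=> _ _ /=; ring); by move=> ? _.

Section PartA.
Variables (F : numFieldType) (V : vectType F) (br : V -> V -> V) (e : nat -> V)
  (al ga : nat -> F) (be : nat -> nat -> F).
Hypothesis Hp : has_parameters 4 5 8 br e al ga be.

Let Hlie : is_lie br. Proof. by case: Hp. Qed.
Let Hfil : filiform 8 br. Proof. by case: Hp. Qed.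
Let Had : adapted_basis 8 br e. Proof. by case: Hp. Qed.
Let Htr : assoc_triple 8 br e 4 5. Proof. by case: Hp. Qed.
Let Hlaw : general_law 4 5 8 br e al ga be. Proof. by case: Hp. Qed.
Let Hb : basis_of fullv (btuple 8 e). Proof. by case: Had. Qed.
Let H1 : forall h, (3 <= h <= 8)%N -> br (e 1%N) (e h) = e h.-1.
Proof. by case: Had. Qed.
Let H2 : forall h, (1 <= h <= 8)%N -> br (e 2%N) (e h) = 0.
Proof. by case: Had. Qed.
Let law0 : forall a b, (2 <= a)%N -> (a < b)%N -> (b <= 8)%N ->
         ~~ law_listed 4 5 8 a b -> br (e a) (e b) = 0.
Proof. by case: Hlaw. Qed.

Local Notation P := (Pcoord 8 e).

Let L46 : br (e 4) (e 6) = \sum_(0 <= m < 1) al m.+1 *: e (0 + 2 - m)%N.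
Proof. by case: Hlaw => L _ _ _; apply: (L 0%N). Qed.
Let L56 : br (e 5) (e 6) = \sum_(0 <= m < 2) al m.+1 *: e (1 + 2 - m)%N.
Proof. by case: Hlaw => L _ _ _; apply: (L 1%N). Qed.
Let L47 : br (e 4) (e 7) = al 1%N *: e 3 + \sum_(1 <= m < 2) ga m *: e (2 + 1 - m)%N.
Proof. by case: Hlaw => _ L _ _; apply: (L 2%N). Qed.
Let L48 : br (e 4) (e 8) = al 1%N *: e 4 + \sum_(1 <= m < 3) ga m *: e (3 + 1 - m)%N.
Proof. by case: Hlaw => _ L _ _; apply: (L 3%N). Qed.
Let L57 : br (e 5) (e 7) = \sum_(2 <= h < 4) P h (br (e 4) (e 7) + br (e 5) (e 6)) *: e h.+1
   + be 1%N 2%N *: e 2.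
Proof. by case: Hlaw => _ _ L _; apply: (L 1%N 2%N). Qed.
Let L67 : br (e 6) (e 7) = \sum_(2 <= h < 5) P h (br (e 5) (e 7) + br (e 6) (e 6)) *: e h.+1
   + be 2%N 2%N *: e 2.
Proof. by case: Hlaw => _ _ L _; apply: (L 2%N 2%N). Qed.
Let L58 : br (e 5) (e 8) = \sum_(2 <= h < 5) P h (br (e 4) (e 8) + br (e 5) (e 7)) *: e h.+1
   + be 1%N 3%N *: e 2.
Proof. by case: Hlaw => _ _ L _; apply: (L 1%N 3%N). Qed.
Let L68 : br (e 6) (e 8) = \sum_(2 <= h < 6) P h (br (e 5) (e 8) + br (e 6) (e 7)) *: e h.+1
   + be 2%N 3%N *: e 2.
Proof. by case: Hlaw => _ _ L _; apply: (L 2%N 3%N). Qed.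
Let L78 : br (e 7) (e 8) = \sum_(2 <= h < 7) P h (br (e 6) (e 8) + br (e 7) (e 7)) *: e h.+1
   + be 3%N 3%N *: e 2.
Proof. by case: Hlaw => _ _ L _; apply: (L 3%N 3%N). Qed.

Definition tabU (a b m : nat) : F :=
  match a, b with
  | 1, 2 => 0
  | 1, _ => (m == b.-1)%:R
  | 4, 6 => al 1 * (m == 2)%:R
  | 5, 6 => al 1 * (m == 3)%:R + al 2 * (m == 2)%:R
  | 4, 7 => al 1 * (m == 3)%:R + ga 1 * (m == 2)%:R
  | 4, 8 => al 1 * (m == 4)%:R + ga 1 * (m == 3)%:R + ga 2 * (m == 2)%:R
  | 5, 7 => be 1 2 * (m == 2)%:R + (ga 1 + al 2) * (m == 3)%:R + 2%:R * al 1 * (m == 4)%:R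
  | 6, 7 => be 2 2 * (m == 2)%:R + be 1 2 * (m == 3)%:R + (ga 1 + al 2) * (m == 4)%:R
            + 2%:R * al 1 * (m == 5)%:R
  | 5, 8 => be 1 3 * (m == 2)%:R + (ga 2 + be 1 2) * (m == 3)%:R
            + (2%:R * ga 1 + al 2) * (m == 4)%:R + 3%:R * al 1 * (m == 5)%:R
  | 6, 8 => be 2 3 * (m == 2)%:R + (be 1 3 + be 2 2) * (m == 3)%:R
            + (ga 2 + 2%:R * be 1 2) * (m == 4)%:R + (3%:R * ga 1 + 2%:R * al 2) * (m == 5)%:R
            + 5%:R * al 1 * (m == 6)%:R
  | 7, 8 => be 3 3 * (m == 2)%:R + be 2 3 * (m == 3)%:R + (be 1 3 + be 2 2) * (m == 4)%:R
            + (ga 2 + 2%:R * be 1 2) * (m == 5)%:R + (3%:R * ga 1 + 2%:R * al 2) * (m == 6)%:R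
            + 5%:R * al 1 * (m == 7)%:R
  | _, _ => 0
  end.

Let e_spec m : (1 <= m <= 8)%N -> forall h, P h (e m) = (h == m)%:R.
Proof. by move=> Hm h; rewrite (Pcoord_e Hb). Qed.

Lemma T46 m : (1 <= m <= 8)%N -> P m (br (e 4) (e 6)) = tabU 4 6 m.
Proof. rewrite L46; peval; unroll; peval; rewrite !(Pcoord_e Hb) //; move: m; by_m. Qed.

Ltac tsolve L := rewrite L; peval; unroll; peval; rewrite ?(brxx Hlie) ?Pcoord0.

Lemma T56 m : (1 <= m <= 8)%N -> P m (br (e 5) (e 6)) = tabU 5 6 m.
Proof. tsolve L56; rewrite !(Pcoord_e Hb) //; move: m; by_m. Qed.
Lemma T47 m : (1 <= m <= 8)%N -> P m (br (e 4) (e 7)) = tabU 4 7 m.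
Proof. tsolve L47; rewrite !(Pcoord_e Hb) //; move: m; by_m. Qed.
Lemma T48 m : (1 <= m <= 8)%N -> P m (br (e 4) (e 8)) = tabU 4 8 m.
Proof. tsolve L48; rewrite !(Pcoord_e Hb) //; move: m; by_m. Qed.
Lemma T57 m : (1 <= m <= 8)%N -> P m (br (e 5) (e 7)) = tabU 5 7 m.
Proof. tsolve L57; rewrite ?T47 ?T56 // !(Pcoord_e Hb) //; move: m; by_m. Qed.
Lemma T67 m : (1 <= m <= 8)%N -> P m (br (e 6) (e 7)) = tabU 6 7 m.
Proof. tsolve L67; rewrite ?T57 // !(Pcoord_e Hb) //; move: m; by_m. Qed.
Lemma T58 m : (1 <= m <= 8)%N -> P m (br (e 5) (e 8)) = tabU 5 8 m.
Proof. tsolve L58; rewrite ?T48 ?T57 // !(Pcoord_e Hb) //; move: m; by_m. Qed.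
Lemma T68 m : (1 <= m <= 8)%N -> P m (br (e 6) (e 8)) = tabU 6 8 m.
Proof. tsolve L68; rewrite ?T58 ?T67 // !(Pcoord_e Hb) //; move: m; by_m. Qed.
Lemma T78 m : (1 <= m <= 8)%N -> P m (br (e 7) (e 8)) = tabU 7 8 m.
Proof. tsolve L78; rewrite ?T68 // !(Pcoord_e Hb) //; move: m; by_m. Qed.

Lemma T1 b m : (3 <= b <= 8)%N -> P m (br (e 1) (e b)) = (m == b.-1)%:R.
Proof. move=> Hb3; rewrite H1 // (Pcoord_e Hb) //. by case: b Hb3 => // b /=; lia. Qed.
Lemma T12 m : P m (br (e 1) (e 2)) = 0.
Proof. by rewrite (br_anti Hlie) H2 // oppr0 Pcoord0. Qed.
Lemma Tz a b m : (2 <= a)%N -> (a < b)%N -> (b <= 8)%N ->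
  ~~ law_listed 4 5 8 a b -> P m (br (e a) (e b)) = 0.
Proof. by move=> *; rewrite law0 // Pcoord0. Qed.

Lemma TU a b m : (1 <= a)%N -> (a < b)%N -> (b <= 8)%N -> (1 <= m <= 8)%N ->
  P m (br (e a) (e b)) = tabU a b m.
Proof.
move=> + + + Hm.
case: a => [|[|[|[|[|[|[|[|a]]]]]]]]; try done.
all: case: b => [|[|[|[|[|[|[|[|[|b]]]]]]]]]; try done.
all: move=> _ _ _.
all: first [ by rewrite T12 | by rewrite T1 | by rewrite Tz
  | by rewrite T46 | by rewrite T56 | by rewrite T47 | by rewrite T48
  | by rewrite T57 | by rewrite T67 | by rewrite T58 | by rewrite T68 | by rewrite T78 ].
Qed.

Definition tabF (a b m : nat) : F :=
  if (a < b)%N then tabU a b m else if (b < a)%N then - tabU b a m else 0.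

Lemma TcE a b m : (1 <= a <= 8)%N -> (1 <= b <= 8)%N -> (1 <= m <= 8)%N ->
  P m (br (e a) (e b)) = tabF a b m.
Proof.
move=> /andP [Ha1 Ha8] /andP [Hb1 Hb8] Hm; rewrite /tabF.
case: (ltngtP a b) => Hab.
- by rewrite TU.
- by rewrite (br_anti Hlie) PcoordN TU.
- by rewrite Hab (brxx Hlie) Pcoord0.
Qed.

Ltac jac J a b c := have J := jac_coord Hb Hlie a b c 2%N; rewrite /Tc in J; unroll_in J.

Lemma al1_0 : al 1 = 0.
Proof.
jac J 4%N 6%N 8%N; rewrite !TcE // /tabF /tabU /= in J.
have : al 1 ^+ 2 * 6%:R = 0 by apply: etrans J; ring.
by move/eqP; rewrite mulf_eq0 pnatr_eq0 orbF expf_eq0 /= => /eqP.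
Qed.

Lemma al2_E : al 2 = - ga 1.
Proof.
jac J 5%N 7%N 8%N; rewrite !TcE // /tabF /tabU /= al1_0 in J.
have : (al 2 + ga 1) ^+ 2 * 2%:R = 0 by apply: etrans J; ring.
move/eqP; rewrite mulf_eq0 pnatr_eq0 orbF expf_eq0 /= addr_eq0 => /eqP //.
Qed.

Lemma ga1_neq0 : ga 1 != 0.
Proof.
apply/eqP => H; case: Htr => _ [_ H56 _]; apply: H56 => /=.
apply: (eq_coords Hb) => m Hm; rewrite T56 // Pcoord0 /= al1_0 al2_E H; ring.
Qed.

Lemma ga2_E : ga 2 = - (5%:R / 2%:R) * be 1 2.
Proof.
jac J 6%N 7%N 8%N; rewrite !TcE // /tabF /tabU /= al1_0 al2_E in J.
have : ga 1 * (2%:R * ga 2 + 5%:R * be 1 2) = 0 by apply: etrans J; ring.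
move/eqP; rewrite mulf_eq0 (negPf ga1_neq0) /= => /eqP E.
have -> : ga 2 = ((2%:R * ga 2 + 5%:R * be 1 2) - 5%:R * be 1 2) / 2%:R.
  by field.
by rewrite E; field.
Qed.

Local Notation Sp := (Sp e).

Lemma lcsE k : lcs br k.+2 = Sp (6 - k).
Proof.
case: Hfil => _ _ Hd.
have small : forall k, (k <= 6)%N -> lcs br k.+2 = Sp (6 - k).
  move=> k0 Hk; apply/eqP; rewrite eq_sym eqEdim (Sp_lcs Hb Hlie H1).
  by rewrite Hd ?(dim_Sp Hb) //; lia.
case: (leqP k 6) => Hk; first exact: small.
have {Hk} [n ->] : exists n, k = (n + 7)%N by exists (k - 7)%N; lia.
have lcsS : forall k, lcs br k.+3 = brsp br (lcs br k.+2) fullv by [].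
have Z : brsp br 0%VS fullv = 0%VS.
  apply/eqP; rewrite -subv0; apply: brsp_subP => u w.
  by rewrite memv0 => /eqP -> _; rewrite (br0l Hlie) mem0v.
elim: n => [|n IH].
  by rewrite add0n lcsS (small 6%N) // (Sp0 e) Z.
rewrite addSn lcsS IH.
have -> : (6 - (n + 7) = 0)%N by lia.
have -> : (6 - (n + 7).+1 = 0)%N by lia.
by rewrite (Sp0 e) Z.
Qed.

Ltac ij_cases := let i := fresh "i" in let j := fresh "j" in move=> i j;
  case: i => [|[|[|[|[|[|[|[|i]]]]]]]]; try done;
  case: j => [|[|[|[|[|[|[|[|j]]]]]]]]; try done.

Lemma supp i j : (2 <= i <= 7)%N -> (2 <= j <= 7)%N ->
  br (e i) (e j) = tabF i j 2 *: e 2 + tabF i j 3 *: e 3.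
Proof.
move: i j; ij_cases; move=> *.
all: apply: (eq_coords Hb) => m Hm; rewrite TcE // PcoordD !PcoordZ !(Pcoord_e Hb) //.
all: rewrite /tabF /tabU /= ?al1_0 ?al2_E; ring.
Qed.

Definition Qsp : {vspace V} := <<[:: e 2; be 1 2 *: e 3]>>%VS.

Lemma comb2 c d c' : c = c' -> d = 0 -> c *: e 2 + d *: e 3 = c' *: e 2.
Proof. by move=> -> ->; rewrite scale0r addr0. Qed.
Lemma memL c d : d = 0 -> c *: e 2 + d *: e 3 \in <[e 2]>%VS.
Proof. by move=> ->; rewrite scale0r addr0 memvZ // memv_line. Qed.
Lemma zero2 c d : c = 0 -> d = 0 -> c *: e 2 + d *: e 3 = 0.
Proof. by move=> -> ->; rewrite !scale0r addr0. Qed.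
Lemma memQ c d k : d = k * be 1 2 -> c *: e 2 + d *: e 3 \in Qsp.
Proof.
move=> ->; rewrite -scalerA; apply: rpredD; apply: rpredZ; apply: memv_span;
  by rewrite !inE eqxx ?orbT.
Qed.

Lemma V56 : br (e 5) (e 6) = (- ga 1) *: e 2.
Proof. rewrite supp // /tabF /tabU /= ?al1_0 ?al2_E; apply: comb2; ring. Qed.
Lemma V47 : br (e 4) (e 7) = ga 1 *: e 2.
Proof. rewrite supp // /tabF /tabU /= ?al1_0 ?al2_E; apply: comb2; ring. Qed.
Lemma V67 : br (e 6) (e 7) = be 2 2 *: e 2 + be 1 2 *: e 3.
Proof. rewrite supp // /tabF /tabU /= ?al1_0 ?al2_E; congr (_ *: _ + _ *: _); ring. Qed.

Lemma Lmem i j : (2 <= i <= 7)%N -> (2 <= j <= 7)%N -> (i + j <= 12)%N ->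
  br (e i) (e j) \in <[e 2]>%VS.
Proof.
move: i j; ij_cases; move=> Hi Hj Hij; rewrite supp //.
all: apply: memL; rewrite /tabF /tabU /= ?al1_0 ?al2_E; ring.
Qed.

Lemma Zbr i j : (2 <= i <= 7)%N -> (2 <= j <= 7)%N -> (i + j <= 10)%N ->
  br (e i) (e j) = 0.
Proof.
move: i j; ij_cases; move=> Hi Hj Hij; rewrite supp //.
all: apply: zero2; rewrite /tabF /tabU /= ?al1_0 ?al2_E; ring.
Qed.

Lemma Qmem i j : (2 <= i <= 7)%N -> (2 <= j <= 7)%N -> br (e i) (e j) \in Qsp.
Proof.
move: i j; ij_cases; move=> Hi Hj; rewrite supp //.
all: rewrite /tabF /tabU /= ?al1_0 ?al2_E.
all: first [ apply: (@memQ _ _ 0); ring | apply: (@memQ _ _ 1); ring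
           | apply: (@memQ _ _ (-1)); ring ].
Qed.

Lemma Lsp a b : (a <= 6)%N -> (b <= 6)%N -> (a + b <= 10)%N ->
  (brsp br (Sp a) (Sp b) <= <[e 2]>)%VS.
Proof.
move=> Ha Hb' Hab; rewrite /Sp; apply: (brsp_span_sub Hlie) => x y.
case/mapP => i Hi ->; case/mapP => j Hj ->; rewrite mem_iota in Hi; rewrite mem_iota in Hj.
apply: Lmem; lia.
Qed.

Lemma Zsp a b : (a <= 6)%N -> (b <= 6)%N -> (a + b <= 8)%N ->
  brsp br (Sp a) (Sp b) = 0%VS.
Proof.
move=> Ha Hb' Hab; apply/eqP; rewrite -subv0 /Sp; apply: (brsp_span_sub Hlie) => x y.
case/mapP => i Hi ->; case/mapP => j Hj ->; rewrite mem_iota in Hi; rewrite mem_iota in Hj.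
rewrite Zbr ?mem0v //; lia.
Qed.

Lemma Qsub a b : (a <= 6)%N -> (b <= 6)%N -> (brsp br (Sp a) (Sp b) <= Qsp)%VS.
Proof.
move=> Ha Hb'; rewrite /Sp; apply: (brsp_span_sub Hlie) => x y.
case/mapP => i Hi ->; case/mapP => j Hj ->; rewrite mem_iota in Hi; rewrite mem_iota in Hj.
apply: Qmem; lia.
Qed.

Lemma e2_in (U W : {vspace V}) i j c : br (e i) (e j) = c *: e 2 -> c != 0 ->
  e i \in U -> e j \in W -> e 2 \in brsp br U W.
Proof.
move=> E c0 Hi Hj; have -> : e 2 = c^-1 *: br (e i) (e j).
  by rewrite E scalerA mulVf // scale1r.
by rewrite rpredZ // mem_brsp.
Qed.

Lemma V65 : br (e 6) (e 5) = ga 1 *: e 2.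
Proof. by rewrite (br_anti Hlie) V56 scaleNr opprK. Qed.
Lemma V74 : br (e 7) (e 4) = (- ga 1) *: e 2.
Proof. by rewrite (br_anti Hlie) V47 scaleNr. Qed.
Lemma nga1 : - ga 1 != 0.
Proof. by rewrite oppr_eq0 ga1_neq0. Qed.

Lemma e3_in (U W : {vspace V}) : e 2 \in brsp br U W ->
  (e 6 \in U /\ e 7 \in W) \/ (e 7 \in U /\ e 6 \in W) ->
  be 1 2 *: e 3 \in brsp br U W.
Proof.
move=> He2 [[H6 H7]|[H7 H6]].
  have -> : be 1 2 *: e 3 = br (e 6) (e 7) - be 2 2 *: e 2 by rewrite V67 addrC addKr.
  by rewrite rpredB ?rpredZ // mem_brsp.
have -> : be 1 2 *: e 3 = - br (e 7) (e 6) - be 2 2 *: e 2.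
  by rewrite (br_anti Hlie) opprK V67 addrC addKr.
by rewrite rpredB ?rpredN ?rpredZ // mem_brsp.
Qed.

Lemma Qsp_sub (S : {vspace V}) : e 2 \in S -> be 1 2 *: e 3 \in S -> (Qsp <= S)%VS.
Proof.
move=> He2 He3; apply/span_subvP => x; rewrite !inE => /orP [/eqP ->|/eqP ->] //.
Qed.

Lemma L_sub (S : {vspace V}) : e 2 \in S -> (<[e 2]> <= S)%VS.
Proof. by move=> H; rewrite -span_seq1; apply/span_subvP => x; rewrite inE => /eqP ->. Qed.

Lemma dimL : \dim <[e 2]> = 1%N.
Proof. by rewrite dim_vline (e_neq0 Hb). Qed.

Lemma dimQ : \dim Qsp = if be 1 2 == 0 then 1%N else 2%N.
Proof.
case: eqP => Hbe.
  rewrite -dimL; congr (\dim _); apply/eqP; rewrite eqEsubv; apply/andP; split.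
    by apply: Qsp_sub; rewrite ?memv_line // Hbe scale0r mem0v.
  by apply: L_sub; apply: memv_span; rewrite inE eqxx.
rewrite -(dim_Sp Hb (m := 2)) //; congr (\dim _); apply/eqP; rewrite eqEsubv.
apply/andP; split.
  by apply: Qsp_sub; rewrite ?rpredZ //; apply: mem_Sp.
apply: Sp_sub => i /andP [Hi1 Hi2].
have [->|->] : i = 2%N \/ i = 3%N by lia.
  by apply: memv_span; rewrite inE eqxx.
have -> : e 3 = (be 1 2)^-1 *: (be 1 2 *: e 3).
  by rewrite scalerA mulVf ?scale1r //; apply/eqP.
by apply: rpredZ; apply: memv_span; rewrite !inE eqxx orbT.
Qed.

Lemma eqL a b i j c : (a <= 6)%N -> (b <= 6)%N -> (a + b <= 10)%N ->
  br (e i) (e j) = c *: e 2 -> c != 0 -> (2 <= i < a.+2)%N -> (2 <= j < b.+2)%N ->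
  brsp br (Sp a) (Sp b) = <[e 2]>%VS.
Proof.
move=> Ha Hb' Hab E c0 Hi Hj; apply/eqP; rewrite eqEsubv Lsp //=.
by apply: L_sub; apply: (e2_in E c0); apply: mem_Sp.
Qed.

Lemma eqQ a b : (a <= 6)%N -> (b <= 6)%N -> (5 <= a)%N -> (5 <= b)%N -> (11 <= a + b)%N ->
  brsp br (Sp a) (Sp b) = Qsp.
Proof.
move=> Ha Hb' Ha5 Hb5 Hab; apply/eqP; rewrite eqEsubv Qsub //=.
have He2 : e 2 \in brsp br (Sp a) (Sp b).
  by apply: (e2_in V56 nga1); apply: mem_Sp; lia.
apply: Qsp_sub => //; apply: e3_in => //.
case: (leqP 6 a) => Ha6.
  by right; split; apply: mem_Sp; lia.
by left; split; apply: mem_Sp; lia.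
Qed.

Arguments lcs : simpl never.

Definition hpv (c k l : nat) : nat :=
  if (k == 0%N) || (l == 0%N) then 0%N
  else if k == 1%N then (7 - l)%N else if l == 1%N then (7 - k)%N
  else if (8 <= k + l)%N then 0%N
  else if (k + l <= 5)%N then c else 1%N.

Lemma HPcoefE k l : HPcoef br k l = (hpv (if be 1 2 == 0 then 1%N else 2%N) k l)%:Z.
Proof.
rewrite /HPcoef /hpv.
case: k => [|k] //=; case: l => [|l] //=.
case: k => [|k].
  rewrite (brspC Hlie) (_ : brsp br (lcs br l.+1) (lcs br 1) = lcs br l.+2) //.
  by rewrite lcsE (dim_Sp Hb) //; lia.
case: l => [|l].
  rewrite (_ : brsp br (lcs br k.+2) (lcs br 1) = lcs br k.+3) //.
  by rewrite lcsE (dim_Sp Hb) //; lia.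
rewrite !lcsE /=.
case: (leqP 4 (k + l)) => Hkl.
  rewrite Zsp ?dimv0; try lia.
  by rewrite ifT //; lia.
move: Hkl; case: k => [|[|[|[|k]]]]; case: l => [|[|[|[|l]]]] => //= _.
all: first [ by rewrite eqQ // dimQ; case: eqP
  | by rewrite (eqL _ _ _ V56 nga1) ?dimL
  | by rewrite (eqL _ _ _ V65 ga1_neq0) ?dimL
  | by rewrite (eqL _ _ _ V74 nga1) ?dimL
  | by rewrite (eqL _ _ _ V47 ga1_neq0) ?dimL ].
Qed.

Lemma HPeq k l : HPcoef br k l - HP0coef 8 k l
   = HPdiff458 (if be 1 2 == 0 then 1 else 2) k l.
Proof.
rewrite HPcoefE; case: (be 1 2 == 0).
all: case: k => [|[|[|[|[|[|[|[|k]]]]]]]]; case: l => [|[|[|[|[|[|[|[|l]]]]]]]].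
all: rewrite /HP0coef /HPdiff458 /mono /hpv /=.
all: by [].
Qed.

Lemma partA :
     [/\ [/\ al 1%N = 0, al 2%N = - ga 1%N,
             ga 2%N = - (5%:R / 2%:R) * be 1%N 2%N & ga 1%N != 0],
         [/\ brsp br (lcs br 3) (lcs br 3) = <[e 2%N]>%VS,
             brsp br (lcs br 3) (lcs br 4) = <[e 2%N]>%VS,
             brsp br (lcs br 3) (lcs br 5) = 0%VS,
             brsp br (lcs br 2) (lcs br 2) = <<[:: e 2%N; be 1%N 2%N *: e 3%N]>>%VS
           & brsp br (lcs br 2) (lcs br 3) = <<[:: e 2%N; be 1%N 2%N *: e 3%N]>>%VS],
         [/\ brsp br (lcs br 2) (lcs br 4) = <[e 2%N]>%VS,
             brsp br (lcs br 2) (lcs br 5) = <[e 2%N]>%VS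
           & brsp br (lcs br 2) (lcs br 6) = 0%VS]
       & forall k l : nat,
           HPcoef br k l - HP0coef 8 k l
             = HPdiff458 (if be 1%N 2%N == 0 then 1 else 2) k l].
Proof.
split; first by split; [exact: al1_0 | exact: al2_E | exact: ga2_E | exact: ga1_neq0].
- rewrite !lcsE /=; split.
  + by rewrite (eqL _ _ _ V56 nga1).
  + by rewrite (eqL _ _ _ V65 ga1_neq0).
  + by rewrite Zsp.
  + by rewrite eqQ.
  + by rewrite eqQ.
- rewrite !lcsE /=; split.
  + by rewrite (eqL _ _ _ V65 ga1_neq0).
  + by rewrite (eqL _ _ _ V74 nga1).
  + by rewrite Zsp.
- exact: HPeq.
Qed.

End PartA.

Section JacGen.
Variables (R : fieldType) (n : nat) (K : 'I_n -> 'I_n -> 'I_n -> R).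

Definition Bf (x y : 'I_n -> R) (m : 'I_n) : R := \sum_a \sum_b x a * y b * K a b m.

Lemma swap12 (G : 'I_n -> 'I_n -> 'I_n -> R) :
  \sum_p \sum_q \sum_r G p q r = \sum_q \sum_p \sum_r G p q r.
Proof. exact: exchange_big. Qed.
Lemma swap23 (G : 'I_n -> 'I_n -> 'I_n -> R) :
  \sum_p \sum_q \sum_r G p q r = \sum_p \sum_r \sum_q G p q r.
Proof. by apply: eq_bigr => p _; exact: exchange_big. Qed.

Lemma expandJ x y z m : Bf x (Bf y z) m =
  \sum_a \sum_c \sum_d x a * y c * z d * (\sum_b K c d b * K a b m).
Proof.
rewrite /Bf; apply: eq_bigr => a _.
rewrite (eq_bigr (fun b => \sum_c \sum_d x a * y c * z d * (K c d b * K a b m))); last first.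
  move=> b _; rewrite mulr_sumr mulr_suml; apply: eq_bigr => c _.
  rewrite mulr_sumr mulr_suml; apply: eq_bigr => d _; ring.
rewrite exchange_big; apply: eq_bigr => c _; rewrite exchange_big.
by apply: eq_bigr => d _; rewrite mulr_sumr.
Qed.

Lemma jacobi_gen
  (HK : forall a c d m, \sum_b (K c d b * K a b m + K d a b * K c b m + K a c b * K d b m) = 0)
  x y z m : Bf x (Bf y z) m + Bf y (Bf z x) m + Bf z (Bf x y) m = 0.
Proof.
have E2 : Bf y (Bf z x) m =
    \sum_a \sum_c \sum_d x a * y c * z d * (\sum_b K d a b * K c b m).
  rewrite expandJ swap23 swap12; apply: eq_bigr => a _; apply: eq_bigr => c _.
  by apply: eq_bigr => d _; ring.
have E3 : Bf z (Bf x y) m =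
    \sum_a \sum_c \sum_d x a * y c * z d * (\sum_b K a c b * K d b m).
  rewrite expandJ swap12 swap23; apply: eq_bigr => a _; apply: eq_bigr => c _.
  by apply: eq_bigr => d _; ring.
rewrite E2 E3 expandJ -!big_split /=; apply: big1 => a _.
rewrite -!big_split /=; apply: big1 => c _.
rewrite -!big_split /=; apply: big1 => d _.
by rewrite -!mulrDr -!big_split /= HK mulr0.
Qed.

Lemma Bf_ext x x' y y' m : (forall i, x i = x' i) -> (forall i, y i = y' i) ->
  Bf x y m = Bf x' y' m.
Proof.
move=> Hx Hy; apply: eq_bigr => a _; apply: eq_bigr => b _; by rewrite Hx Hy.
Qed.

Lemma BfDl k x x' y m : Bf (fun i => k * x i + x' i) y m = k * Bf x y m + Bf x' y m.
Proof.
rewrite /Bf mulr_sumr -big_split; apply: eq_bigr => a _.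
rewrite mulr_sumr -big_split; apply: eq_bigr => b _ /=; ring.
Qed.
Lemma BfDr k x y y' m : Bf x (fun i => k * y i + y' i) m = k * Bf x y m + Bf x y' m.
Proof.
rewrite /Bf mulr_sumr -big_split; apply: eq_bigr => a _.
rewrite mulr_sumr -big_split; apply: eq_bigr => b _ /=; ring.
Qed.

Lemma Bf_anti (HK : forall a b m, K b a m = - K a b m) x m : Bf x x m = - Bf x x m.
Proof.
rewrite {1}/Bf exchange_big /Bf -sumrN; apply: eq_bigr => a _.
rewrite -sumrN; apply: eq_bigr => b _; rewrite HK; ring.
Qed.

Lemma sum_delta (f : 'I_n -> R) (i : 'I_n) : \sum_(j : 'I_n) ((j : nat) == i)%:R * f j = f i.
Proof.
rewrite (bigD1 i) //= eqxx mul1r big1 ?addr0 // => j Hj.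
by rewrite (_ : ((j : nat) == i) = false) ?mul0r //; apply/negbTE.
Qed.

Lemma Bf_delta (i j : 'I_n) m :
  Bf (fun a : 'I_n => ((a : nat) == i)%:R) (fun b : 'I_n => ((b : nat) == j)%:R) m = K i j m.
Proof.
rewrite /Bf (eq_bigr (fun a : 'I_n => ((a : nat) == i)%:R * \sum_(b : 'I_n) ((b : nat) == j)%:R * K a b m)).
  rewrite sum_delta; exact: sum_delta.
by move=> a _; rewrite mulr_sumr; apply: eq_bigr => b _; ring.
Qed.

End JacGen.

Definition C0 (t : bool) (a b m : nat) : int :=
  match a, b, m with
  | 1, _, _ => if (3 <= b)%N && (m == b.-1) then 1%Z else 0%Z
  | 4, 7, 2 => 1%Z
  | 4, 8, 3 => 1%Z
  | 4, 8, 2 => if t then (-5)%Z else 0%Z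
  | 5, 6, 2 => (-1)%Z
  | 5, 7, 2 => if t then 2%Z else 0%Z
  | 5, 8, 3 => if t then (-3)%Z else 0%Z
  | 5, 8, 4 => 1%Z
  | 6, 7, 3 => if t then 2%Z else 0%Z
  | 6, 8, 4 => if t then (-1)%Z else 0%Z
  | 6, 8, 5 => 1%Z
  | 7, 8, 5 => if t then (-1)%Z else 0%Z
  | 7, 8, 6 => 1%Z
  | _, _, _ => 0%Z
  end.

Definition Cz (t : bool) (a b m : nat) : int :=
  if (a < b)%N then C0 t a b m else if (b < a)%N then - C0 t b a m else 0.

Definition isum (f : nat -> int) : int := foldr (fun i acc => f i + acc) 0 (iota 1 8).

Definition jac_ok (t : bool) : bool :=
  all (fun a => all (fun c => all (fun d => all (fun m =>
    isum (fun b => Cz t c d b * Cz t a b m + Cz t d a b * Cz t c b m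
                   + Cz t a c b * Cz t d b m) == 0)
    (iota 1 8)) (iota 1 8)) (iota 1 8)) (iota 1 8).

Lemma jac_okP t : jac_ok t.
Proof. by case: t; vm_compute. Qed.

Definition supp_ok (t : bool) : bool :=
  all (fun i => all (fun j => all (fun m =>
    (Cz t i j m == 0) || ((2 <= m)%N && (m <= i.-1)%N)) (iota 1 8)) (iota 1 8)) (iota 2 7)
  && all (fun j => all (fun m => (Cz t 1 j m == 0) || ((2 <= m)%N && (m <= 7)%N))
         (iota 1 8)) (iota 1 8).

Lemma supp_okP t : supp_ok t.
Proof. by case: t; vm_compute. Qed.

Lemma isumE f : isum f = \sum_(b < 8) f b.+1.
Proof.
rewrite /isum -(big_mkord xpredT (fun b => f b.+1)).
have -> : \sum_(0 <= b < 8) f b.+1 = \sum_(b <- iota 1 8) f b.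
  by rewrite /index_iota subn0 -(addn0 1%N) iotaDl big_map.
elim: (iota 1 8) => [|x s IH]; by rewrite ?big_nil ?big_cons //= IH.
Qed.

Section Model.
Variables (F : numFieldType) (t : bool).

Definition Kz (a b m : 'I_8) : F := (Cz t a.+1 b.+1 m.+1)%:~R.
Local Notation MV := 'rV[F]_8.
Definition me (i : nat) : MV := \row_(j < 8) ((j : nat) == i.-1)%:R.
Definition mbr (x y : MV) : MV := \row_m Bf Kz (fun a => x 0 a) (fun b => y 0 b) m.

Lemma Kz_anti a b m : Kz b a m = - Kz a b m.
Proof.
rewrite /Kz /Cz -intrN; congr (_%:~R).
by case: (ltngtP a.+1 b.+1) => H //; rewrite ?opprK // H oppr0.
Qed.

Lemma Kz_jac a c d m :
  \sum_b (Kz c d b * Kz a b m + Kz d a b * Kz c b m + Kz a c b * Kz d b m) = 0.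
Proof.
have := jac_okP t; rewrite /jac_ok.
have mem : forall i : 'I_8, i.+1 \in iota 1 8 by move=> i; rewrite mem_iota; have := ltn_ord i; lia.
move=> /allP /(_ _ (mem a)) /allP /(_ _ (mem c)) /allP /(_ _ (mem d)).
move=> /allP /(_ _ (mem m)) /eqP; rewrite isumE => H.
rewrite /Kz (eq_bigr (fun b : 'I_8 => (Cz t c.+1 d.+1 b.+1 * Cz t a.+1 b.+1 m.+1
   + Cz t d.+1 a.+1 b.+1 * Cz t c.+1 b.+1 m.+1
   + Cz t a.+1 c.+1 b.+1 * Cz t d.+1 b.+1 m.+1)%:~R)); last first.
  by move=> b _; rewrite !intrD !intrM.
by rewrite -(big_morph _ (@intrD _) (mulr0z 1)) H.
Qed.

Lemma Bf_mbr (x y z : MV) m :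
  Bf Kz (fun i => x 0 i) (fun i => mbr y z 0 i) m
  = Bf Kz (fun i => x 0 i) (Bf Kz (fun i => y 0 i) (fun i => z 0 i)) m.
Proof. by apply: Bf_ext => // i; rewrite mxE. Qed.

Lemma mbr_lie : is_lie mbr.
Proof.
split.
- move=> k x y z; apply/rowP => m; rewrite !mxE.
  rewrite (@Bf_ext _ _ _ _ (fun i => k * x 0 i + y 0 i) _ (fun b => z 0 b)); last 2 first.
  + by move=> i; rewrite mxE; congr (_ + _); exact: mxE.
  + by [].
  by rewrite BfDl.
- move=> k x y z; apply/rowP => m; rewrite !mxE.
  rewrite (@Bf_ext _ _ _ _ (fun i => x 0 i) _ (fun i => k * y 0 i + z 0 i)); last 2 first.
  + by [].
  + by move=> i; rewrite mxE; congr (_ + _); exact: mxE.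
  by rewrite BfDr.
- move=> x; apply/rowP => m; rewrite !mxE.
  have := Bf_anti Kz_anti (fun a => x 0 a) m.
  set S := Bf _ _ _ m => H; apply/eqP.
  have : S *+ 2 == 0 by rewrite mulr2n {2}H subrr.
  by rewrite mulrn_eq0.
- move=> x y z; apply/rowP => m; rewrite !mxE !Bf_mbr.
  exact: jacobi_gen Kz_jac _ _ _ _.
Qed.

End Model.

Section Model2.
Variables (F : numFieldType) (t : bool).
Local Notation MV := 'rV[F]_8.
Local Notation mbr := (@mbr F t).
Local Notation me := (me F).

Lemma sum_delta' (f : nat -> F) h : (1 <= h <= 8)%N ->
  \sum_(0 <= m < 8) f m * (h == m.+1)%:R = f h.-1.
Proof.
case: h => // h /andP [_ Hh].
rewrite big_mkord (eq_bigr (fun m : 'I_8 => ((m : nat) == Ordinal Hh)%:R * f m)).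
  by rewrite sum_delta.
by move=> m _; rewrite eqSS eq_sym mulrC.
Qed.

Lemma me_expand (v : MV) : v = \sum_(i < 8) v 0 i *: me i.+1.
Proof.
apply/rowP => j; rewrite summxE (eq_bigr (fun i : 'I_8 => ((i : nat) == j)%:R * v 0 i)).
  by rewrite sum_delta.
by move=> i _; rewrite !mxE /= eq_sym mulrC.
Qed.

Lemma mHb : basis_of fullv (btuple 8 me).
Proof.
rewrite basisEdim size_tuple; apply/andP; split.
  apply/subvP => v _; rewrite (me_expand v); apply: rpred_sum => i _.
  apply: rpredZ; apply: memv_span; rewrite (btupleE) map_f // mem_iota.
  by have := ltn_ord i; lia.
by rewrite dimvf /dim /=.
Qed.

Lemma MbrE a b : (1 <= a <= 8)%N -> (1 <= b <= 8)%N ->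
  mbr (me a) (me b) = \sum_(0 <= m < 8) (Cz t a b m.+1)%:~R *: me m.+1.
Proof.
case: a => // a /andP [_ Ha]; case: b => // b /andP [_ Hb].
apply/rowP => j; rewrite mxE summxE.
rewrite (@Bf_ext _ _ _ _ (fun i : 'I_8 => ((i : nat) == Ordinal Ha)%:R) _
   (fun i : 'I_8 => ((i : nat) == Ordinal Hb)%:R)); last 2 first.
- by move=> i; rewrite mxE.
- by move=> i; rewrite mxE.
rewrite Bf_delta /Kz /= big_mkord (eq_bigr (fun m : 'I_8 => ((m : nat) == j)%:R * (Cz t a.+1 b.+1 m.+1)%:~R)).
  by rewrite sum_delta.
by move=> m _; rewrite !mxE /= eq_sym mulrC.
Qed.

Lemma MTc a b h : (1 <= a <= 8)%N -> (1 <= b <= 8)%N -> (1 <= h <= 8)%N ->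
  Pcoord 8 me h (mbr (me a) (me b)) = (Cz t a b h)%:~R.
Proof.
move=> Ha Hb Hh; rewrite MbrE // Pcoord_sum.
rewrite (@eq_big_nat _ _ _ 0 8 _ (fun m => (Cz t a b m.+1)%:~R * (h == m.+1)%:R)).
  by rewrite sum_delta'; case: h Hh.
by move=> m /andP [_ Hm]; rewrite PcoordZ (Pcoord_e mHb) //; lia.
Qed.

End Model2.

Ltac mm t := let m := fresh "m" in let H := fresh "H" in let H' := fresh "H" in
  move=> m /andP [H H']; move: m H H'; case; first done;
  do 8! (case; first by move=> _ _; rewrite /Cz /C0 /=; case: t => /=; ring); by move=> ? _.

Section Model3.
Variables (F : numFieldType) (t : bool).
Local Notation MV := 'rV[F]_8.
Local Notation mbr := (@mbr F t).
Local Notation me := (me F).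
Local Notation P := (Pcoord 8 me).
Local Notation Hb := (mHb F).

Definition mal (n : nat) : F := if n == 2%N then -1 else 0.
Definition mga (n : nat) : F :=
  if n == 1%N then 1 else if n == 2%N then (if t then -5 else 0) else 0.
Definition mbe (k l : nat) : F :=
  if (k == 1%N) && (l == 2%N) then (if t then 2 else 0) else 0.

Let Hlie := mbr_lie F t.
Lemma PM0 m : P m (0 : MV) = 0.
Proof. exact: Pcoord0. Qed.

Lemma mH1 h : (3 <= h <= 8)%N -> mbr (me 1) (me h) = me h.-1.
Proof.
move=> Hh; apply: (eq_coords Hb) => m Hm; rewrite MTc //; last lia.
rewrite (Pcoord_e Hb); last by case: h Hh => //= h; lia.
move: h Hh m Hm; do 3! (case; first done).
do 6! (case; first by move=> _; mm t).
by move=> ? /andP [].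
Qed.

Lemma mH2 h : (1 <= h <= 8)%N -> mbr (me 2) (me h) = 0.
Proof.
move=> Hh; apply: (eq_coords Hb) => m Hm; rewrite MTc // PM0.
move: h Hh m Hm; do 1! (case; first done).
do 8! (case; first by move=> _; mm t).
by move=> ? /andP [].
Qed.

Lemma mH3 h : (2 <= h <= 8)%N -> mbr (me 3) (me h) = 0.
Proof.
move=> Hh; apply: (eq_coords Hb) => m Hm; rewrite PM0 MTc //; last lia.
move: h Hh m Hm; do 2! (case; first done).
do 7! (case; first by move=> _; mm t).
by move=> ? /andP [].
Qed.

Lemma Mgen i j : (2 <= i <= 8)%N -> (1 <= j <= 8)%N -> mbr (me i) (me j) \in Sp me (i.-2).
Proof.
move=> Hi Hj; rewrite (expand Hb (mbr _ _)) big_mkord; apply: rpred_sum => m _.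
rewrite MTc; [ | lia | lia | have := ltn_ord m; lia].
have := supp_okP t; rewrite /supp_ok => /andP [/allP H _].
have /H /allP : i \in iota 2 7 by rewrite mem_iota; lia.
move=> /(_ j); rewrite mem_iota => /(_ ltac:(lia)) /allP /(_ m.+1).
rewrite mem_iota => /(_ ltac:(have := ltn_ord m; lia)) /orP [/eqP ->|Hm].
  by rewrite scale0r mem0v.
by apply: rpredZ; apply: mem_Sp; lia.
Qed.

Lemma Mgen1 j : (1 <= j <= 8)%N -> mbr (me 1) (me j) \in Sp me 6.
Proof.
move=> Hj; rewrite (expand Hb (mbr _ _)) big_mkord; apply: rpred_sum => m _.
rewrite MTc; [ | lia | lia | have := ltn_ord m; lia].
have := supp_okP t; rewrite /supp_ok => /andP [_ /allP H].
have /H /allP : j \in iota 1 8 by rewrite mem_iota; lia.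
move=> /(_ m.+1); rewrite mem_iota => /(_ ltac:(have := ltn_ord m; lia)) /orP [/eqP ->|Hm].
  by rewrite scale0r mem0v.
by apply: rpredZ; apply: mem_Sp; lia.
Qed.

Lemma mlcs_sub k : (lcs mbr k.+2 <= Sp me (6 - k))%VS.
Proof.
have fullE : fullv = <<btuple 8 me>>%VS by rewrite (span_basis Hb).
elim: k => [|k IH].
  rewrite (_ : lcs mbr 2 = brsp mbr fullv fullv) // fullE.
  apply: (brsp_span_sub Hlie) => x y; rewrite btupleE.
  case/mapP => i; rewrite mem_iota => Hi ->; case/mapP => j; rewrite mem_iota => Hj ->.
  case: (leqP i 1) => Hi1.
    by rewrite (_ : i = 1%N) ?Mgen1 //; lia.
  have Hsub : (Sp me i.-2 <= Sp me 6)%VS by apply: Sp_mono; lia.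
  by apply: (subvP Hsub); apply: Mgen; lia.
rewrite (_ : lcs mbr k.+3 = brsp mbr (lcs mbr k.+2) fullv) //.
apply: (brsp_subP) => u w Hu Hw.
move: (subvP IH _ Hu); rewrite fullE in Hw; move: Hw.
rewrite btupleE => Hw Hu'.
apply: (br_span_sub Hlie _ Hu' Hw) => x y.
case/mapP => i; rewrite mem_iota => Hi ->; case/mapP => j; rewrite mem_iota => Hj ->.
have Hsub : (Sp me i.-2 <= Sp me (6 - k.+1))%VS by apply: Sp_mono; lia.
by apply: (subvP Hsub); apply: Mgen; lia.
Qed.

Lemma mlcsE k : (k <= 6)%N -> lcs mbr k.+2 = Sp me (6 - k).
Proof.
move=> Hk; apply/eqP; rewrite eqEsubv mlcs_sub /=.
exact: (Sp_lcs Hb Hlie mH1).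
Qed.

Lemma mfil : filiform 8 mbr.
Proof.
split => //; first by rewrite (size_basis Hb).
case => // [] // [] // k Hk; rewrite mlcsE ?(dim_Sp Hb); lia.
Qed.

Lemma madapted : adapted_basis 8 mbr me.
Proof. split; [exact: Hb | exact: mH1 | exact: mH2 | exact: mH3]. Qed.

Lemma massoc : assoc_triple 8 mbr me 4 5.
Proof.
split; split => //.
- move/(congr1 (P 3)); rewrite PM0 MTc // => /eqP; by rewrite intr_eq0.
- by move=> k Hk; exfalso; lia.
- move/(congr1 (P 2)); rewrite PM0 MTc // => /eqP; by rewrite intr_eq0.
- move=> k Hk; have -> : k = 4%N by lia.
  move=> H; apply: H; apply: (eq_coords Hb) => m Hm; rewrite PM0 MTc //.
  all: try (by move: m Hm; mm t).
Qed.


Ltac lawtac t Hb := let m := fresh "m" in let Hm := fresh "Hm" in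
    apply (eq_coords Hb); move=> m Hm; rewrite MTc //; peval; unroll; peval;
    rewrite ?MTc // ?(Pcoord_e Hb) // /mal /mga /mbe; move: m Hm; mm t.

Lemma mlaw : general_law 4 5 8 mbr me mal mga mbe.
Proof.
split.
- move=> i Hi; have [->|->] : i = 0%N \/ i = 1%N by lia.
  + lawtac t (mHb F).
  + lawtac t (mHb F).
- move=> j Hj; have [->|->] : j = 2%N \/ j = 3%N by lia.
  + lawtac t (mHb F).
  + lawtac t (mHb F).
- move=> k l Hl Hk.
  have [[->->]|[[->->]|[[->->]|[[->->]|[->->]]]]] :
    (k = 1 /\ l = 2 \/ k = 2 /\ l = 2 \/ k = 1 /\ l = 3 \/ k = 2 /\ l = 3 \/ k = 3 /\ l = 3)%N
    by lia.
  + lawtac t (mHb F).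
  + lawtac t (mHb F).
  + lawtac t (mHb F).
  + lawtac t (mHb F).
  + lawtac t (mHb F).
- move=> a b Ha Hab Hb8 Hnl; apply (eq_coords Hb); move=> m Hm.
  rewrite PM0 MTc; [ | lia | lia | done].
  move: a b Ha Hab Hb8 Hnl m Hm.
  case=> [|[|[|[|[|[|[|[|a]]]]]]]]; try done.
  all: case=> [|[|[|[|[|[|[|[|[|b]]]]]]]]]; try done.
  all: move=> _ _ _ _; mm t.
Qed.

Lemma mparams : has_parameters 4 5 8 mbr me mal mga mbe.
Proof. split; [exact: Hlie | exact: mfil | exact: madapted | exact: massoc | exact: mlaw]. Qed.

Lemma mbe12 : mbe 1 2 = (if t then 2 else 0).
Proof. by []. Qed.

End Model3.

Theorem mainTheorem17 (R : realType) :
  (forall (V : vectType R[i]) (br : V -> V -> V) (e : nat -> V)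
          (al ga : nat -> R[i]) (be : nat -> nat -> R[i]),
     has_parameters 4 5 8 br e al ga be ->
     [/\ [/\ al 1%N = 0, al 2%N = - ga 1%N,
             ga 2%N = - (5%:R / 2%:R) * be 1%N 2%N & ga 1%N != 0],
         [/\ brsp br (lcs br 3) (lcs br 3) = <[e 2%N]>%VS,
             brsp br (lcs br 3) (lcs br 4) = <[e 2%N]>%VS,
             brsp br (lcs br 3) (lcs br 5) = 0%VS,
             brsp br (lcs br 2) (lcs br 2) = <<[:: e 2%N; be 1%N 2%N *: e 3%N]>>%VS
           & brsp br (lcs br 2) (lcs br 3) = <<[:: e 2%N; be 1%N 2%N *: e 3%N]>>%VS],
         [/\ brsp br (lcs br 2) (lcs br 4) = <[e 2%N]>%VS,
             brsp br (lcs br 2) (lcs br 5) = <[e 2%N]>%VS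
           & brsp br (lcs br 2) (lcs br 6) = 0%VS]
       & forall k l : nat,
           HPcoef br k l - HP0coef 8 k l
             = HPdiff458 (if be 1%N 2%N == 0 then 1 else 2) k l])
  /\ (exists (V : vectType R[i]) (br : V -> V -> V) (e : nat -> V)
             (al ga : nat -> R[i]) (be : nat -> nat -> R[i]),
        has_parameters 4 5 8 br e al ga be /\ be 1%N 2%N != 0)
  /\ (exists (V : vectType R[i]) (br : V -> V -> V) (e : nat -> V)
             (al ga : nat -> R[i]) (be : nat -> nat -> R[i]),
        has_parameters 4 5 8 br e al ga be /\ be 1%N 2%N = 0).
Proof.
split.
  move=> V br e al ga be Hp; exact: (partA Hp).
split.
  exists (matrix_matrix__canonical__vector_Vector R[i] 1 8), (mbr true), (me R[i]),
    (mal R[i]), (mga R[i] true), (mbe R[i] true).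
  by split; [exact: mparams | rewrite /mbe /= pnatr_eq0].
exists (matrix_matrix__canonical__vector_Vector R[i] 1 8), (mbr false), (me R[i]),
  (mal R[i]), (mga R[i] false), (mbe R[i] false).
by split; [exact: mparams | rewrite /mbe /=].
Qed.
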